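(* Let $\mathfrak g$ be a finite-dimensional real Lie algebra whose commutator ideal $[\mathfrak g,\mathfrak g]$ is one-dimensional. Then every complex structure on $\mathfrak g$ is abelian.
   Context: A complex structure on a real Lie algebra $\mathfrak g$ is a linear map $J$ with $J^2=-\mathrm{Id}$ and $J[x,y]-[Jx,y]-[x,Jy]-J[Jx,Jy]=0$ for all $x,y$; it is abelian if $[Jx,Jy]=[x,y]$ for all $x,y$. *)

(* Defs.v *)
From HB Require Import structures.
From mathcomp Require Import all_boot all_order all_algebra.
From mathcomp Require Import reals.
Set Implicit Arguments. Unset Strict Implicit. Unset Printing Implicit Defensive.
Import Order.TTheory GRing.Theory Num.Theory.
Local Open Scope ring_scope.

Definition is_lie_bracket (R : realType) (V : vectType R) (br : V -> V -> V) : Prop :=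
  [/\ (forall (a : R) (x y z : V), br (a *: x + y) z = a *: br x z + br y z),
      (forall (a : R) (x y z : V), br x (a *: y + z) = a *: br x y + br x z),
      (forall x : V, br x x = 0) &
      (forall x y z : V, br x (br y z) + br y (br z x) + br z (br x y) = 0)].

Definition is_commutator_ideal (R : realType) (V : vectType R)
  (br : V -> V -> V) (U : {vspace V}) : Prop :=
  (forall x y : V, br x y \in U) /\
  (forall W : {vspace V}, (forall x y : V, br x y \in W) -> (U <= W)%VS).

Definition is_complex_structure (R : realType) (V : vectType R)
  (br : V -> V -> V) (J : 'End(V)) : Prop :=
  (forall x : V, J (J x) = - x) /\
  (forall x y : V, J (br x y) - br (J x) y - br x (J y) - J (br (J x) (J y)) = 0).

Definition is_abelian_complex_structure (R : realType) (V : vectType R)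
  (br : V -> V -> V) (J : 'End(V)) : Prop :=
  forall x y : V, br (J x) (J y) = br x y.

(* Main.v *)
Require Import Defs.
From HB Require Import structures.
From mathcomp Require Import all_boot all_order all_algebra.
From mathcomp Require Import reals.
Import Order.TTheory GRing.Theory Num.Theory.
Local Open Scope ring_scope.

Theorem mainTheorem8 (R : realType) (V : vectType R) (br : V -> V -> V)
  (Hlie : is_lie_bracket br)
  (Hdim : exists U : {vspace V}, is_commutator_ideal br U /\ \dim U = 1%N)
  (J : 'End(V)) (HJ : is_complex_structure br J) :
  is_abelian_complex_structure br J.
Proof.
case: Hdim => U [[inU _] dU].
have Unz : U != 0%VS by apply/eqP => U0; rewrite U0 dimv0 in dU.
set z := vpick U.
have znz : z != 0 by rewrite vpick0.
have UE : U = <[z]>%VS.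
  apply/eqP; rewrite eq_sym eqEdim dim_vline znz dU leqnn andbT.
  by rewrite -memvE memv_pick.
have coef : forall x y, exists c, br x y = c *: z.
  by move=> x y; apply/vlineP; rewrite -UE.
case: HJ => J2 HN.
have key : forall a b : R, a *: J z = b *: z -> a = 0.
  move=> a b E; apply/eqP; apply: contraT => an0.
  have Jz : J z = (b / a) *: z.
    by rewrite mulrC -scalerA -E scalerA mulVf // scale1r.
  have := J2 z; rewrite Jz linearZ /= Jz scalerA => /eqP.
  rewrite -subr_eq0 opprK -{2}[z]scale1r -scalerDl scaler_eq0 (negbTE znz) orbF.
  by rewrite -expr2 gt_eqF // ltr_wpDl ?sqr_ge0.
move=> x y.
case: (coef x y) => c1 E1; case: (coef (J x) (J y)) => c2 E2.
case: (coef (J x) y) => c3 E3; case: (coef x (J y)) => c4 E4.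
have H := HN x y; rewrite E1 E2 E3 E4 !linearZ /= !scalerN in H.
have : (c1 - c2) *: J z = (c3 + c4) *: z.
  apply/eqP; rewrite -subr_eq0 -H scalerBl scalerDl opprD !addrA.
  by apply/eqP; rewrite [RHS]addrAC; congr (_ + _); exact: addrAC.
by move/key/eqP; rewrite subr_eq0 => /eqP c12; rewrite E1 E2 c12.
Qed.
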